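(* Let $k\le l$ be positive integers with $\gcd(k,l)=1$, let $n\ge1$ and $m\ge 0$ be integers, and write $m=qn+r$ with integers $q\ge 0$, $0\le r<n$. If $r\ge \frac{n}{q+2}$, then $$L^{k,l}(m,n)=nkq+\min\bigl(nk,\ r(k+l)\bigr).$$
   Context: $\mathcal D^{k,l}(m,n)$ denotes the set of all $nk\times nl$ matrices with nonnegative integer entries all of whose row sums equal $ml$ and all of whose column sums equal $mk$. For an $s\times t$ matrix $A=(a_{ij})$ with $s\le t$, a transversal of $A$ is a set of entries $T=\{a_{1i_1},\dots,a_{si_s}\}$ with $i_1,\dots,i_s\in\{1,\dots,t\}$ pairwise distinct, and $|T|=a_{1i_1}+\cdots+a_{si_s}$; if $s>t$, the transversals of $A$ are those of its transpose. The tropical determinant is ${\rm tdet}(A)=\max_T|T|$, and $L^{k,l}(m,n)=\min_{A\in\mathcal D^{k,l}(m,n)}{\rm tdet}(A)$. *)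

(* Defs.v *)
From mathcomp Require Import all_boot all_order all_algebra.
Unset Printing Implicit Defensive.

Definition inD (k l m n : nat) (A : 'M[nat]_(n * k, n * l)) : bool :=
  [forall i, \sum_(j < n * l) A i j == m * l] &&
  [forall j, \sum_(i < n * k) A i j == m * k].

Definition tdet_le (s t : nat) (A : 'M[nat]_(s, t)) : nat :=
  \max_(f : {ffun 'I_s -> 'I_t} | injectiveb f) \sum_(i < s) A i (f i).
Arguments tdet_le {s t} A.

Definition tdet (s t : nat) (A : 'M[nat]_(s, t)) : nat :=
  if s <= t then tdet_le A else tdet_le (trmx A).
Arguments tdet {s t} A.

(* Every A in D has all
   entries <= m*l (they are bounded by a row sum), so the minimum may be taken
   over matrices with entries in 'I_(m*l).+1.  The starting value
   n*k*(m*l) (the total sum of entries of any A in D) is >= tdet A for every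
   A in D, so it does not affect the minimum (and D is nonempty). *)
Definition Lkl (k l m n : nat) : nat :=
  \big[minn/(n * k * (m * l))]_(A : 'M['I_(m * l).+1]_(n * k, n * l)
        | @inD k l m n (map_mx val A)) tdet (map_mx val A).

(* Main.v *)
Require Import Defs.
From mathcomp Require Import all_boot all_order all_algebra.
From mathcomp Require Import zify.
Import Order.TTheory GRing.Theory Num.Theory.
Set Implicit Arguments. Unset Strict Implicit. Unset Printing Implicit Defensive.

Section Hall.
Variables (I J : finType) (R : I -> J -> bool) (y0 : J).

Definition nbh (B : {set J}) (X : {set I}) : {set J} :=
  [set y in B | [exists x in X, R x y]].

Lemma nbhS B (X Y : {set I}) : X \subset Y -> nbh B X \subset nbh B Y.
Proof.
move=> sXY; apply/subsetP=> y; rewrite !inE => /andP[-> /existsP[x /andP[xX Rxy]]].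
by apply/existsP; exists x; rewrite (subsetP sXY).
Qed.

Lemma hall_gen n (A : {set I}) (B : {set J}) : #|A| <= n ->
  (forall X : {set I}, X \subset A -> #|X| <= #|nbh B X|) ->
  exists f : I -> J, [/\ {in A &, injective f}, {in A, forall x, f x \in B}
                       & {in A, forall x, R x (f x)}].
Proof.
elim: n A B => [|n IH] A B.
  rewrite leqn0 cards_eq0 => /eqP -> _.
  by exists (fun _ => y0); split=> x; rewrite inE.
move=> cA hA.
case: (boolP [exists X : {set I}, [&& X \proper A, X != set0 & #|nbh B X| <= #|X|]]).
- case/existsP=> X /and3P[pXA nX0 tX].
  have sXA := proper_sub pXA.
  have cX : #|X| <= n.
    by have := proper_card pXA; move=> h; rewrite -ltnS (leq_trans h).
  have cAX : #|A :\: X| <= n.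
    rewrite -ltnS (leq_trans _ cA) // cardsDS // ltn_subrL.
    by rewrite card_gt0 nX0 (leq_trans _ (subset_leq_card sXA)) // card_gt0.
  have hX : forall Y : {set I}, Y \subset X -> #|Y| <= #|nbh (nbh B X) Y|.
    { move=> Y sYX; have -> : nbh (nbh B X) Y = nbh B Y.
        apply/setP=> y; rewrite !inE; apply/idP/idP.
          by case/andP=> /andP[->] _ ->.
        move=> /andP[yB /existsP[x /andP[xY Rxy]]]; rewrite yB /=.
        by apply/andP; split; apply/existsP; exists x; rewrite ?Rxy ?xY ?(subsetP sYX).
      by apply: hA; apply: subset_trans sXA. }
  have [f1 [i1 b1 r1]] := IH X (nbh B X) cX hX.
  have hAX : forall Y : {set I}, Y \subset A :\: X -> #|Y| <= #|nbh (B :\: nbh B X) Y|.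
    { move=> Y sY; have sYA : Y \subset A by apply: subset_trans sY (subsetDl _ _).
      have dXY : [disjoint X & Y].
        rewrite disjoint_sym; apply/pred0P=> x /=.
        apply/negbTE/negP=> /andP[xY xX]; have := subsetP sY x xY.
        by rewrite inE xX.
      have h1 : #|X :|: Y| <= #|nbh B (X :|: Y)| by apply: hA; rewrite subUset sXA.
      have h2 : nbh B (X :|: Y) \subset nbh B X :|: nbh (B :\: nbh B X) Y.
        apply/subsetP=> y; rewrite !inE => /andP[yB /existsP[x /andP[]]].
        rewrite inE => /orP[xX Rxy|xY Rxy].
          by apply/orP; left; rewrite yB; apply/existsP; exists x; rewrite xX.
        rewrite yB /=; case: [exists x0 in X, R x0 y] => //=; apply/existsP; exists x; by rewrite xY Rxy.
      have := leq_trans h1 (subset_leq_card h2).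
      rewrite cardsU (disjoint_setI0 dXY) cards0 subn0 => h3.
      have h4 := leq_trans h3 (leq_card_setU _ _).
      by rewrite -(leq_add2l #|X|) (leq_trans h4) // leq_add2r. }
  have [f2 [i2 b2 r2]] := IH (A :\: X) (B :\: nbh B X) cAX hAX.
  exists (fun x => if x \in X then f1 x else f2 x); split.
  + move=> x y xA yA /=.
    case: ifP => xX; case: ifP => yX.
    * by apply: i1.
    * move=> e; have := b2 y; rewrite inE yX yA => /(_ isT).
      by rewrite -e inE (b1 x xX).
    * move=> e; have := b2 x; rewrite inE xX xA => /(_ isT).
      by rewrite e inE (b1 y yX).
    * by apply: i2; rewrite inE ?xX ?yX.
  + move=> x xA /=; case: ifP => xX.
      by have := b1 x xX; rewrite inE => /andP[].
    by have := b2 x; rewrite inE xX xA => /(_ isT); rewrite inE => /andP[].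
  + move=> x xA /=; case: ifP => xX; first exact: r1.
    by apply: r2; rewrite inE xX.
- move/existsPn=> hn.
  case: (set_0Vmem A) => [->|[a aA]].
    by exists (fun _ => y0); split=> x; rewrite inE.
  have := hA [set a]; rewrite sub1set aA cards1 => /(_ isT).
  rewrite card_gt0 => /set0Pn[b]; rewrite inE => /andP[bB /existsP[a' /andP[]]].
  rewrite inE => /eqP -> Rab.
  have cAa : #|A :\ a| <= n.
    by move: cA; rewrite (cardsD1 a A) aA.
  have hAa : forall Y : {set I}, Y \subset A :\ a -> #|Y| <= #|nbh (B :\ b) Y|.
    move=> Y sY.
    case: (set_0Vmem Y) => [->|[y0' yY]]; first by rewrite cards0.
    have pYA : Y \proper A.
      apply/properP; split; first by apply: subset_trans sY (subsetDl _ _).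
      by exists a => //; apply/negP=> aY; have := subsetP sY a aY; rewrite !inE eqxx.
    have := hn Y; rewrite pYA /=.
    have -> : (Y != set0) by apply/set0Pn; exists y0'.
    rewrite /= -ltnNge => lt1.
    have s2 : nbh B Y :\ b \subset nbh (B :\ b) Y.
      apply/subsetP=> y; rewrite !inE => /andP[yb /andP[yB ey]].
      by rewrite yb yB.
    have := subset_leq_card s2.
    rewrite (cardsD1 b (nbh B Y)) in lt1.
    by move=> h'; apply: leq_trans h'; case: (b \in nbh B Y) lt1; rewrite /= ?add1n ?add0n ?ltnS // => /ltnW.
  have [f2 [i2 b2 r2]] := IH (A :\ a) (B :\ b) cAa hAa.
  exists (fun x => if x == a then b else f2 x); split.
  + move=> x y xA yA /=.
    case: ifP => [/eqP->|xa]; case: ifP => [/eqP->|ya] //.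
    * move=> e; have := b2 y; rewrite !inE ya yA => /(_ isT).
      by rewrite -e eqxx.
    * move=> e; have := b2 x; rewrite !inE xa xA => /(_ isT).
      by rewrite e eqxx.
    * by apply: i2; rewrite !inE ?xA ?yA ?xa ?ya.
  + move=> x xA /=; case: ifP => [//|xa].
    by have := b2 x; rewrite !inE xA xa => /(_ isT) /andP[].
  + move=> x xA /=; case: ifP => [/eqP->//|xa].
    by apply: r2; rewrite !inE xA xa.
Qed.
End Hall.
Section Hung.
Variables (T : finType) (P : T -> T -> nat).
Local Open Scope ring_scope.

Lemma sum_ind (X : {set T}) : \sum_x (if x \in X then 1 else 0 : int) = #|X|%:Z.
Proof. by rewrite -big_mkcond /= sumr_const natz. Qed.

Lemma sum_split (u : T -> int) (X : {set T}) :
  \sum_x u x = \sum_x (u x - (if x \in X then 1 else 0)) + #|X|%:Z.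
Proof. by rewrite sumrB sum_ind subrK. Qed.

Lemma sum_split2 (u : T -> int) (X : {set T}) :
  \sum_x (u x + (if x \in X then 1 else 0)) = \sum_x u x + #|X|%:Z.
Proof. by rewrite big_split /= sum_ind. Qed.

Definition covered (u v : T -> int) := forall x y, (P x y)%:Z <= u x + v y.

Lemma cover_ge0 u v : covered u v -> 0 <= \sum_x u x + \sum_y v y.
Proof.
move=> cv; rewrite -big_split /=; apply: sumr_ge0 => x _.
by apply: le_trans (cv x x).
Qed.

Lemma hung_step (y0 : T) N u v : covered u v -> \sum_x u x + \sum_y v y <= N%:Z ->
  exists f : T -> T, injective f /\ exists u' v', covered u' v' /\
     \sum_x u' x + \sum_y v' y <= (\sum_x P x (f x))%:Z.
Proof.
elim/ltn_ind: N u v => N IH u v cv hN.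
pose Rt x y := (P x y)%:Z == u x + v y.
case: (boolP [forall X : {set T}, #|X| <= #|nbh Rt setT X|])%N => [/forallP hall|].
- have [f [fi _ fR]] := @hall_gen T T Rt y0 #|[set: T]| setT setT (leqnn _)
    (fun X _ => hall X).
  have fI : injective f by move=> x y; apply: fi; rewrite inE.
  exists f; split => //; exists u, v; split => //.
  have -> : (\sum_x P x (f x))%:Z = \sum_x (u x + v (f x)).
    rewrite (big_morph Posz PoszD (erefl _)); apply: eq_bigr => x _; apply/eqP; exact: fR (in_setT x).
  by rewrite big_split /= [\sum_y v y](reindex_inj fI).
- rewrite negb_forall => /existsP[X]; rewrite -ltnNge => hX.
  set NX := nbh Rt setT X.
  pose u' x := u x - (if x \in X then 1 else 0).
  pose v' y := v y + (if y \in NX then 1 else 0).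
  have cv' : covered u' v'.
    move=> x y; rewrite /u' /v'.
    have := cv x y.
    case: ifP => xX; case: ifP => yN; try lia.
    have : ~~ Rt x y.
      by apply/negP=> r; move/negbT: yN; rewrite inE /= in_setT /=; move/existsPn => h; have := h x; rewrite xX r.
    rewrite /Rt => /eqP ne le; lia.
  have hv : \sum_x u' x + \sum_y v' y = \sum_x u x + \sum_y v y - #|X|%:Z + #|NX|%:Z.
    rewrite /u' /v' sum_split2 (sum_split u X). lia.
  have h0 := cover_ge0 cv'.
  have hX' : (#|NX| < #|X|)%N := hX.
  have N0 : (0 < N)%N by clearbody NX u' v'; lia.
  have hN' : (N.-1 < N)%N by rewrite ltn_predL.
  apply: (IH N.-1 hN' u' v' cv').
  lia.
Qed.

End Hung.

Section Rect.
Variables (s t : nat) (A : 'M[nat]_(s, t)).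
Hypotheses (le_st : (s <= t)%N) (t0 : (0 < t)%N).

Definition tdet_le' := \max_(f : {ffun 'I_s -> 'I_t} | injectiveb f) \sum_(i < s) A i (f i).

Definition Ppad (x y : 'I_t) : nat :=
  match (insub (val x) : option 'I_s) with Some i => A i y | None => 0%N end.

Lemma PpadW i y : Ppad (widen_ord le_st i) y = A i y.
Proof. by rewrite /Ppad /= valK. Qed.

Lemma PpadN (x : 'I_t) y : ~~ (x < s)%N -> Ppad x y = 0%N.
Proof. by move=> h; rewrite /Ppad insubN. Qed.

Lemma sum_pad (F : 'I_t -> nat) : (forall x : 'I_t, ~~ (x < s)%N -> F x = 0%N) ->
  (\sum_(x < t) F x = \sum_(i < s) F (widen_ord le_st i))%N.
Proof.
move=> h0; rewrite (bigID (fun x : 'I_t => x < s)%N) /=.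
rewrite [X in (_ + X)%N]big1 ?addn0; last by move=> x /h0.
by rewrite big_ord_narrow.
Qed.

Local Open Scope ring_scope.

Lemma sum_padz (F : 'I_t -> int) : (forall x : 'I_t, 0 <= F x) ->
  \sum_(i < s) F (widen_ord le_st i) <= \sum_(x < t) F x.
Proof.
move=> h0; rewrite (bigID (fun x : 'I_t => x < s)%N) /=.
rewrite big_ord_narrow lerDl; exact: sumr_ge0.
Qed.

Lemma cover_rect : exists (u : 'I_s -> nat) (v : 'I_t -> nat),
  (forall i j, A i j <= u i + v j)%N /\
  (\sum_i u i + \sum_j v j <= tdet_le')%N.
Proof.
pose y0 := Ordinal t0.
pose M := (\sum_x \sum_y Ppad x y)%N.
have cv0 : covered Ppad (fun _ => M%:Z) (fun _ => 0).
  move=> x y; rewrite addr0 lez_nat /M.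
  rewrite (bigD1 x) //= (bigD1 y) //= -addnA; exact: leq_addr.
pose val0 := \sum_(x : 'I_t) (M%:Z) + \sum_(y : 'I_t) (0:int).
have hval0 : val0 <= (absz val0)%:Z by lia.
have [f [fI [u' [v' [cv hv]]]]] := @hung_step _ Ppad y0 (absz val0) _ _ cv0 hval0.
have [j0 _ hj0] := @arg_minP _ _ _ y0 xpredT v' isT.
have hj : forall j, v' j0 <= v' j by move=> j; exact: hj0.
have hpos : forall x, 0 <= u' x + v' j0.
  by move=> x; apply: le_trans (cv x j0).
pose w := widen_ord le_st.
exists (fun i => absz (u' (w i) + v' j0)), (fun j => absz (v' j - v' j0)); split.
  move=> i j; have := cv (w i) j; rewrite PpadW.
  have := hj j; have := hpos (w i); lia.
have e1 : forall F : 'I_s -> nat, ((\sum_i F i)%N)%:Z = \sum_i (F i)%:Z.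
  by move=> F; rewrite (big_morph Posz PoszD (erefl _)).
have e2 : forall F : 'I_t -> nat, ((\sum_i F i)%N)%:Z = \sum_i (F i)%:Z.
  by move=> F; rewrite (big_morph Posz PoszD (erefl _)).
pose g := [ffun i => f (w i)].
have gI : injectiveb g.
  apply/injectiveP=> i1 i2; rewrite !ffunE => /fI /(congr1 val) /= h.
  exact: val_inj.
have hT : (\sum_i A i (g i) <= tdet_le')%N.
  exact: (@leq_bigmax_cond _ (fun f : {ffun 'I_s -> 'I_t} => injectiveb f) (fun f => \sum_i A i (f i)) g gI).
have hW : (\sum_x Ppad x (f x) = \sum_i A i (g i))%N.
  rewrite sum_pad; last by move=> x hx; rewrite PpadN.
  by apply: eq_bigr => i _; rewrite PpadW ffunE.
rewrite -lez_nat PoszD e1 e2.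
have e3 : \sum_i ((absz (u' (w i) + v' j0))%:Z) = \sum_i (u' (w i) + v' j0).
  by apply: eq_bigr => i _; have := hpos (w i); lia.
have e4 : \sum_j ((absz (v' j - v' j0))%:Z) = \sum_j (v' j - v' j0).
  by apply: eq_bigr => j _; have := hj j; lia.
rewrite e3 e4.
have h5 := @sum_padz (fun x => u' x + v' j0) hpos.
have e6 : \sum_(x < t) (u' x + v' j0) + \sum_j (v' j - v' j0) = \sum_x u' x + \sum_j v' j.
  by rewrite big_split sumrB /= sumr_const addrACA subrr addr0.
apply: le_trans (_ : \sum_x u' x + \sum_j v' j <= _).
  by rewrite -e6 lerD2r.
apply: le_trans hv _; rewrite lez_nat hW; exact: hT.
Qed.
End Rect.

Lemma div_bound (t X q a b : nat) : b < t -> q * t + a <= t * X + b ->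
  q <= X /\ (b < a -> q < X).
Proof.
move=> bt h; split.
  rewrite leqNgt; apply/negP=> hX.
  have : t * X + b < q * t by rewrite mulnC; nia.
  lia.
move=> ba; rewrite ltnNge; apply/negP=> hX.
have : t * X <= q * t by nia.
lia.
Qed.

Lemma sum_lb (s : nat) (F : 'I_s -> nat) c : (forall i, c <= F i) -> s * c <= \sum_i F i.
Proof.
move=> h; have -> : s * c = \sum_(i < s) c by rewrite sum_nat_const card_ord.
by apply: leq_sum => i _; apply: h.
Qed.

Lemma lowerD n k l m q r (A : 'M[nat]_(n * k, n * l)) : 0 < k -> k <= l -> 0 < n ->
  m = q * n + r -> r < n -> inD k l m n A ->
  n * k * q + minn (n * k) (r * (k + l)) <= tdet_le' A.
Proof.
move=> k0 kl n0 hm rn /andP[/forallP hrow /forallP hcol].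
have le_st : n * k <= n * l by rewrite leq_mul2l kl orbT.
have t0 : 0 < n * l by rewrite muln_gt0 n0 (leq_trans k0 kl).
have s0 : 0 < n * k by rewrite muln_gt0 n0 k0.
have [u [v [cv huv]]] := cover_rect A le_st t0.
set s := n * k in u cv huv le_st s0 *; set t := n * l in v cv huv le_st t0 *.
set U := \sum_i u i in huv *; set V := \sum_j v j in huv *.
apply: leq_trans huv.
have hr : forall i, m * l <= t * u i + V.
  move=> i; rewrite -(eqP (hrow i)).
  apply: (@leq_trans (\sum_j (u i + v j))); first by apply: leq_sum => j _; apply: cv.
  by rewrite big_split /= sum_nat_const card_ord.
have hc : forall j, m * k <= U + s * v j.
  move=> j; rewrite -(eqP (hcol j)).
  apply: (@leq_trans (\sum_i (u i + v j))); first by apply: leq_sum => i _; apply: cv.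
  by rewrite big_split /= sum_nat_const card_ord.
have eV := divn_eq V t; have eU := divn_eq U s.
set b := V %/ t in eV *; set be := V %% t in eV *.
set c := U %/ s in eU *; set ga := U %% s in eU *.
have bet : be < t by rewrite ltn_mod.
have gas : ga < s by rewrite ltn_mod.
have row : forall i, q <= u i + b /\ (be < r * l -> q < u i + b).
  move=> i; apply: (div_bound bet).
  have := hr i; rewrite hm eV /t mulnDr mulnDl (mulnC b) -mulnA; lia.
have col : forall j, q <= v j + c /\ (ga < r * k -> q < v j + c).
  move=> j; apply: (div_bound gas).
  have := hc j; rewrite hm eU /s mulnDr mulnDl (mulnC c) -mulnA; lia.
have sU : s * q <= U + s * b.
  have := sum_lb (fun i => (row i).1).
  by rewrite big_split /= sum_nat_const card_ord.
have sV : t * q <= V + t * c.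
  have := sum_lb (fun j => (col j).1).
  by rewrite big_split /= sum_nat_const card_ord.
have bc : q <= b + c.
  have := @div_bound s (c + b) q 0 ga gas; rewrite mulnDr addn0 (mulnC q) => h.
  by case: h => //; move: sU; rewrite eU; lia.
case: (ltnP (b + c) q.+1) => hbc.
  have bc' : b + c = q by lia.
  case: (ltnP be (r * l)) => h1.
    have sU' : s * q.+1 <= U + s * b.
      have := sum_lb (fun i => (row i).2 h1).
      by rewrite big_split /= sum_nat_const card_ord.
    have := @div_bound s (c + b) q.+1 0 ga gas; rewrite mulnDr addn0 (mulnC q.+1) => h.
    by case: h => //; move: sU'; rewrite eU; lia.
  case: (ltnP ga (r * k)) => h2.
    have sV' : t * q.+1 <= V + t * c.
      have := sum_lb (fun j => (col j).2 h2).
      by rewrite big_split /= sum_nat_const card_ord.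
    have := @div_bound t (b + c) q.+1 0 be bet; rewrite mulnDr addn0 (mulnC q.+1) => h.
    by case: h => //; move: sV'; rewrite eV; lia.
  have e1 : b * s <= b * t by rewrite leq_mul2l le_st orbT.
  have e2 : c * s + b * s = s * q by rewrite -mulnDl addnC bc' mulnC.
  rewrite eU eV mulnDr; lia.
have e1 : b * s <= b * t by rewrite leq_mul2l le_st orbT.
have e2 : c * s + b * s = (b + c) * s by rewrite -mulnDl addnC.
have e3 : q.+1 * s <= (b + c) * s by rewrite leq_mul2r hbc orbT.
rewrite eU eV; lia.
Qed.

Lemma sum_min N e : \sum_(g < N) ((g < e) : nat) = minn N e.
Proof.
elim: N => [|N IH]; first by rewrite big_ord0 min0n.
rewrite big_ord_recr /= IH; case: (ltnP N e) => h; lia.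
Qed.

Lemma rot1 N (H : nat -> nat) : 0 < N ->
  \sum_(g < N) H ((g + 1) %% N) = \sum_(g < N) H g.
Proof.
case: N => [//|N] _.
rewrite big_ord_recr big_ord_recl /= addn1 modnn addnC.
congr (_ + _); apply: eq_bigr => i _; rewrite /bump /= add1n modn_small //.
  by rewrite addn1.
by rewrite addn1 ltnS.
Qed.

Lemma rot N (F : nat -> nat) a : 0 < N ->
  \sum_(g < N) F ((a + g) %% N) = \sum_(g < N) F g.
Proof.
move=> N0; elim: a => [|a IH].
  by apply: eq_bigr => g _; rewrite add0n modn_small.
rewrite -[RHS]IH -(rot1 (fun x => F ((a + x) %% N)) N0).
by apply: eq_bigr => g _; rewrite modnDmr addnA addn1.
Qed.

Lemma circ_sum N e a : 0 < N -> e <= N -> \sum_(g < N) (((a + g) %% N < e) : nat) = e.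
Proof.
move=> N0 eN; rewrite (rot (fun x => (x < e) : nat) a N0) sum_min; lia.
Qed.

Lemma sum_div n k (F : nat -> nat) : 0 < k ->
  \sum_(i < n * k) F (i %/ k) = k * \sum_(a < n) F a.
Proof.
move=> k0; elim: n => [|n IH]; first by rewrite mul0n !big_ord0 muln0.
rewrite big_ord_recr /= mulnDr -IH.
have e1 : \sum_(i < n.+1 * k) F (i %/ k) = \sum_(0 <= i < n * k + k) F (i %/ k).
  by rewrite big_mkord mulSn addnC.
have e2 : \sum_(i < n * k) F (i %/ k) = \sum_(0 <= i < n * k) F (i %/ k).
  by rewrite big_mkord.
rewrite e1 e2 (big_cat_nat (leq0n _) (leq_addr k (n * k))) /=; congr (_ + _).
rewrite (eq_big_nat _ _ (F2 := fun _ => F n)); first by rewrite sum_nat_const_nat addKn.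
move=> i /andP[h1 h2]; congr F.
have -> : i = n * k + (i - n * k) by rewrite subnKC.
rewrite divnMDl // divn_small ?addn0 //; lia.
Qed.

Lemma sum_split_nat n r (F : nat -> nat) : r <= n ->
  \sum_(g < n) F g = \sum_(g < r) F g + \sum_(r <= g < n) F g.
Proof.
move=> rn; rewrite -!(big_mkord xpredT) (big_cat_nat (leq0n r) rn).
by [].
Qed.

Lemma weak_dual s t (A : 'M[nat]_(s, t)) (u : 'I_s -> nat) (v : 'I_t -> nat) :
  (forall i j, A i j <= u i + v j) -> tdet_le' A <= \sum_i u i + \sum_j v j.
Proof.
move=> cv; apply/bigmax_leqP => f /injectiveP fI.
apply: (@leq_trans (\sum_i (u i + v (f i)))); first by apply: leq_sum => i _; apply: cv.
rewrite big_split /= leq_add2l.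
have -> : \sum_i v (f i) = \sum_(j in f @: setT) v j.
  by rewrite big_imset //=; [apply: eq_bigl => i; rewrite inE | move=> x y _ _; apply: fI].
rewrite [X in _ <= X](bigID (fun j => j \in f @: setT)) /=; exact: leq_addr.
Qed.

Definition Gmat n k l (G : nat -> nat -> nat) : 'M[nat]_(n * k, n * l) :=
  \matrix_(i, j) G (i %/ k) (j %/ l).

Lemma Gmat_inD n k l m (G : nat -> nat -> nat) : 0 < k -> 0 < l ->
  (forall a g, G a g = G g a) -> (forall a, a < n -> \sum_(g < n) G a g = m) ->
  inD k l m n (Gmat n k l G).
Proof.
move=> k0 l0 sym hs; apply/andP; split; apply/forallP => x; apply/eqP.
  under eq_bigr do rewrite mxE.
  rewrite (@sum_div n l (G (x %/ k))) // hs; first by rewrite mulnC.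
  by rewrite ltn_divLR // mulnC.
under eq_bigr do rewrite mxE sym.
rewrite (@sum_div n k (G (x %/ l))) // hs; first by rewrite mulnC.
by rewrite ltn_divLR // mulnC.
Qed.

Lemma entry_le k l m n (M : 'M[nat]_(n * k, n * l)) i j :
  inD k l m n M -> M i j <= m * l.
Proof.
case/andP=> /forallP h _; rewrite -(eqP (h i)).
by rewrite (bigD1 j) //= leq_addr.
Qed.

Lemma big_minn_le (I : eqType) (r : seq I) (P : pred I) F x i0 :
  i0 \in r -> P i0 -> \big[minn/x]_(i <- r | P i) F i <= F i0.
Proof.
elim: r => //= a r IH; rewrite inE big_cons => /orP[/eqP <-|h] Pi0.
  by rewrite Pi0 geq_minl.
case: (P a); last exact: IH.
exact: leq_trans (geq_minr _ _) (IH h Pi0).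
Qed.

Lemma Lkl_le k l m n (M : 'M[nat]_(n * k, n * l)) u v : k <= l ->
  inD k l m n M -> (forall i j, M i j <= u i + v j) ->
  Lkl k l m n <= \sum_i u i + \sum_j v j.
Proof.
move=> kl hM cv.
pose Am : 'M['I_(m * l).+1]_(n * k, n * l) := (\matrix_(i < n * k, j < n * l) (inord (M i j) : 'I_(m * l).+1))%R.
have hA : map_mx val Am = M.
  by apply/matrixP => i j; rewrite /Am !mxE; apply: inordK; rewrite ltnS (entry_le i j hM).
have hP : inD k l m n (map_mx val Am) by rewrite hA.
rewrite /Lkl; apply: leq_trans (@big_minn_le _ _ (fun A : 'M['I_(m * l).+1]_(n * k, n * l) => inD k l m n (map_mx val A)) (fun A => tdet (map_mx val A)) (n * k * (m * l)) _ (mem_index_enum Am) hP) _.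
rewrite hA /tdet (_ : n * k <= n * l = true); last by rewrite leq_mul2l kl orbT.
exact: weak_dual.
Qed.

Lemma Lkl_ge k l m n T : k <= l ->
  (forall A : 'M[nat]_(n * k, n * l), inD k l m n A -> T <= tdet_le' A) ->
  T <= n * k * (m * l) -> T <= Lkl k l m n.
Proof.
move=> kl h hT; rewrite /Lkl.
apply: (big_ind (fun x => T <= x)) => //.
  by move=> x y hx hy; rewrite leq_min hx hy.
move=> A hA; rewrite /tdet (_ : n * k <= n * l = true); last by rewrite leq_mul2l kl orbT.
exact: h.
Qed.

Definition G1 (n q r : nat) (a g : nat) : nat := q + ((a + g) %% n < r).

Definition G2 (n q r : nat) (a g : nat) : nat :=
  let c := r * (q + 2) - n in
  if (a < r) && (g < r) then c %/ r + ((a + g) %% r < c %% r)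
  else if (a < r) || (g < r) then q.+1 else q.

Lemma G1_sym n q r a g : G1 n q r a g = G1 n q r g a.
Proof. by rewrite /G1 [a + g]addnC. Qed.

Lemma G2_sym n q r a g : G2 n q r a g = G2 n q r g a.
Proof. by rewrite /G2 [a + g]addnC andbC orbC. Qed.

Lemma G1_sum n q r a : r <= n -> 0 < n -> \sum_(g < n) G1 n q r a g = q * n + r.
Proof.
move=> rn n0; rewrite /G1 big_split /= sum_nat_const card_ord circ_sum //.
by rewrite mulnC.
Qed.

Lemma G2_sum n q r a : 0 < r -> r < n -> n <= r * (q + 2) ->
  \sum_(g < n) G2 n q r a g = q * n + r.
Proof.
move=> r0 rn hr; rewrite (sum_split_nat _ (ltnW rn)).
set c := r * (q + 2) - n.
have ec := divn_eq c r.
have er : c %% r < r by rewrite ltn_mod.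
case: (ltnP a r) => ha.
  have -> : \sum_(g < r) G2 n q r a g = \sum_(g < r) (c %/ r + ((a + g) %% r < c %% r)).
    by apply: eq_bigr => g _; rewrite /G2 ha ltn_ord.
  rewrite big_split /= sum_nat_const card_ord circ_sum // ?(ltnW er) //.
  rewrite (eq_big_nat _ _ (F2 := fun _ => q.+1)); last first.
    by move=> g /andP[h1 h2]; rewrite /G2 ha ltnNge h1.
  rewrite sum_nat_const_nat.
  have : r * (c %/ r) + c %% r = c by rewrite mulnC -ec.
  rewrite /c; nia.
have -> : \sum_(g < r) G2 n q r a g = \sum_(g < r) q.+1.
  by apply: eq_bigr => g _; rewrite /G2 ltnNge ha /= ltn_ord.
rewrite (eq_big_nat _ _ (F2 := fun _ => q)); last first.
  by move=> g /andP[h1 h2]; rewrite /G2 ltnNge ha ltnNge h1.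
rewrite sum_nat_const card_ord sum_nat_const_nat; nia.
Qed.

Lemma G2_cover n q r a g : 0 < r -> n <= r * (q + 2) ->
  G2 n q r a g <= (q + (a < r)) + (g < r).
Proof.
move=> r0 hr; rewrite /G2.
set c := r * (q + 2) - n.
have ec := divn_eq c r.
have er : c %% r < r by rewrite ltn_mod.
have cle : c <= r * (q + 2) by rewrite /c leq_subr.
case: (ltnP a r) => ha; case: (ltnP g r) => hg /=; try lia.
set p := c %/ r in ec *; set e := c %% r in ec er *.
case: (ltnP ((a + g) %% r) e) => he /=.
  have : p * r < (q + 2) * r by lia.
  rewrite ltn_pmul2r //; lia.
have : p * r <= (q + 2) * r by lia.
rewrite leq_pmul2r //; lia.
Qed.

Unset Implicit Arguments.

Theorem corollary4p2 (k l n m q r : nat) :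
  0 < k -> k <= l -> coprime k l -> 1 <= n ->
  m = q * n + r -> r < n ->
  n <= r * (q + 2) ->
  Lkl k l m n = n * k * q + minn (n * k) (r * (k + l)).
Proof.
move=> k0 kl _ n0 hm rn hr.
have r0 : 0 < r by move: hr; case: (r) => //; rewrite mul0n; lia.
have l0 : 0 < l by lia.
apply/eqP; rewrite eqn_leq; apply/andP; split; last first.
  apply: Lkl_ge => //.
    by move=> A hA; exact: (lowerD k0 kl n0 hm rn hA).
  have qm : q < m by rewrite hm; nia.
  have h1 := geq_minl (n * k) (r * (k + l)).
  have h2 : n * k * q.+1 <= n * k * m by rewrite leq_mul2l qm orbT.
  have h3 : n * k * m <= n * k * (m * l) by rewrite leq_mul2l leq_pmulr ?orbT.
  rewrite mulnS in h2; lia.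
case: (leqP (n * k) (r * (k + l))) => hc.
  apply: leq_trans (@Lkl_le k l m n (Gmat n k l (G1 n q r)) (fun _ => q.+1) (fun _ => 0) kl _ _) _.
  - apply: Gmat_inD => //; first exact: G1_sym.
    by move=> a _; rewrite G1_sum ?hm ?(ltnW rn) //.
  - by move=> i j; rewrite mxE /G1; case: (_ < r) => /=; lia.
  - rewrite !sum_nat_const !card_ord muln0 addn0; lia.
apply: leq_trans (@Lkl_le k l m n (Gmat n k l (G2 n q r))
   (fun i => q + (i %/ k < r)) (fun j => (j %/ l < r) : nat) kl _ _) _.
- apply: Gmat_inD => //; first exact: G2_sym.
  by move=> a _; rewrite G2_sum ?hm.
- by move=> i j; rewrite mxE; apply: G2_cover.
- rewrite big_split /= sum_nat_const card_ord.
  rewrite (@sum_div n k (fun a => (a < r) : nat)) // (@sum_div n l (fun a => (a < r) : nat)) //.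
  rewrite sum_min (minn_idPr (ltnW rn)); lia.
Qed.
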